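(* Let $X$ be a Tychonoff space. The following are equivalent: (1) $X$ is finite; (2) $T''(X)$ is Noetherian; (3) $T''(X)$ is Artinian.
   Context: $C(X)$ is the ring of real-valued continuous functions on $X$; a cozero set is a set $\{x: h(x)\neq 0\}$ with $h\in C(X)$. $T''(X)$ is the ring (under pointwise operations) of all functions $f\colon X\to\mathbb{R}$ for which there is a dense cozero set $U$ of $X$ with $f|_U$ continuous. *)

(* Defs.v *)
From HB Require Import structures.
From mathcomp Require Import all_boot all_order all_algebra.
From mathcomp Require Import all_classical all_reals all_analysis.
Set Implicit Arguments. Unset Strict Implicit. Unset Printing Implicit Defensive.
Import Order.TTheory GRing.Theory Num.Theory.
Import numFieldNormedType.Exports.
Local Open Scope classical_set_scope.
Local Open Scope ring_scope.

(* Tychonoff = T1 + completely regular (points separated from closed sets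
   by real-valued continuous functions). *)
Definition real_completely_regular (R : realType) (X : topologicalType) : Prop :=
  forall (a : X) (B : set X), closed B -> ~ B a ->
    exists f : X -> R, continuous f /\ f a = 0 /\ (forall b, B b -> f b = 1).

Definition tychonoff_space (R : realType) (X : topologicalType) : Prop :=
  @accessible_space X /\ real_completely_regular R X.

Definition cozero_set (R : realType) (X : topologicalType) (U : set X) : Prop :=
  exists h : X -> R, continuous h /\ U = [set x | h x != 0].

Definition Tpp (R : realType) (X : topologicalType) : set (X -> R) :=
  [set f | exists U : set X, @cozero_set R X U /\ dense U /\ {within U, continuous f}].

Definition Tpp_ideal (R : realType) (X : topologicalType) (I : set (X -> R)) : Prop :=
  [/\ I `<=` @Tpp R X,
      I (fun _ => 0),
      (forall f g, I f -> I g -> I (fun x => f x - g x))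
    & (forall f g, @Tpp R X f -> I g -> I (fun x => f x * g x))].

Definition Tpp_noetherian (R : realType) (X : topologicalType) : Prop :=
  forall I : nat -> set (X -> R), (forall n, @Tpp_ideal R X (I n)) ->
    (forall n, I n `<=` I n.+1) -> exists N, forall n, (N <= n)%N -> I n = I N.

Definition Tpp_artinian (R : realType) (X : topologicalType) : Prop :=
  forall I : nat -> set (X -> R), (forall n, @Tpp_ideal R X (I n)) ->
    (forall n, I n.+1 `<=` I n) -> exists N, forall n, (N <= n)%N -> I n = I N.

(* Main.v *)
Require Import Defs.
From HB Require Import structures.
From mathcomp Require Import all_boot all_order all_algebra.
From mathcomp Require Import all_classical all_reals all_analysis.
From mathcomp Require Import lra.
From mathcomp Require finmap.
Local Open Scope classical_set_scope.

Section S.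
Import Order.TTheory GRing.Theory Num.Theory.
Import numFieldNormedType.Exports.
Local Open Scope ring_scope.
Context (R : realType) (X : topologicalType).

Lemma cozero_open (U : set X) : @cozero_set R X U -> open U.
Proof.
move=> [h [hc ->]].
have -> : [set x | h x != 0] = h @^-1` [set r : R | r != 0] by [].
apply: open_comp; last exact: open_neq.
by move=> x _; apply: hc.
Qed.

Lemma Tpp_two f g : @Tpp R X f -> @Tpp R X g ->
  exists W : set X, @cozero_set R X W /\ dense W /\
    {within W, continuous f} /\ {within W, continuous g}.
Proof.
move=> [U [[h1 [h1c U1]] [dU cU]]] [V [[h2 [h2c V1]] [dV cV]]].
have WE : [set x | h1 x * h2 x != 0] = U `&` V.
  by rewrite U1 V1; apply/seteqP; split => x /=; rewrite mulf_eq0 negb_or => /andP.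
exists (U `&` V); split; last split; last split.
- exists (fun x => h1 x * h2 x); split; last by rewrite WE.
  by move=> x; exact: (continuousM (h1c x) (h2c x)).
- apply: denseI => //; apply: cozero_open; exists h1; split => //.
- exact: continuous_subspaceW cU.
- exact: continuous_subspaceW cV.
Qed.


Lemma dense_setT : dense [set: X].
Proof. by move=> O O0 _; rewrite setIT. Qed.

Lemma cont_Tpp f : continuous f -> @Tpp R X f.
Proof.
move=> fc; exists setT; split; last split.
- exists (fun _ => 1); split; first by move=> x; exact: cst_continuous.
  by apply/seteqP; split => x //= _; rewrite oner_neq0.
- exact: dense_setT.
- exact: continuous_subspaceT.
Qed.

Lemma Tpp_sub f g : @Tpp R X f -> @Tpp R X g -> @Tpp R X (fun x => f x - g x).
Proof.
move=> Tf Tg; have [W [cW [dW [cf cg]]]] := Tpp_two _ _ Tf Tg.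
exists W; split => //; split => // x.
exact: (continuousB (cf x) (cg x)).
Qed.

Lemma Tpp_mul f g : @Tpp R X f -> @Tpp R X g -> @Tpp R X (fun x => f x * g x).
Proof.
move=> Tf Tg; have [W [cW [dW [cf cg]]]] := Tpp_two _ _ Tf Tg.
exists W; split => //; split => // x.
exact: (continuousM (cf x) (cg x)).
Qed.

Definition Van (S : set X) : set (X -> R) :=
  [set f | @Tpp R X f /\ forall x, S x -> f x = 0].

Lemma Van_ideal S : @Tpp_ideal R X (Van S).
Proof.
split.
- by move=> f [].
- by split => //; apply: cont_Tpp; exact: cst_continuous.
- move=> f g [Tf f0] [Tg g0]; split; first exact: Tpp_sub.
  by move=> x Sx; rewrite f0 // g0 // subr0.
- move=> f g Tf [Tg g0]; split; first exact: Tpp_mul.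
  by move=> x Sx; rewrite g0 // mulr0.
Qed.


Lemma infinite_n0 (Y : set X) : infinite_set Y -> exists a, Y a.
Proof.
move=> iY; apply: contra_notP iY => /forallNP Y0.
have -> : Y = set0 by apply/seteqP; split => x // /Y0.
exact: finite_set0.
Qed.

Lemma infinite_sub (A B : set X) : A `<=` B -> infinite_set A -> infinite_set B.
Proof. by move=> AB iA fB; apply: iA; exact: sub_finite_set fB. Qed.

Lemma step (Y : set X) : @tychonoff_space R X -> infinite_set Y ->
  exists a (psi : X -> R), [/\ Y a, continuous psi, psi a = 0 &
    infinite_set (Y `&` [set x | 1/3 < psi x])].
Proof.
move=> [acc crR] iY.
have [a Ya] := infinite_n0 _ iY.
have [b [Yb nba]] := infinite_n0 _ (infinite_setD iY (finite_set1 a)).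
have [phi [phic [phia phib]]] := crR a [set b] (@accessible_closed_set1 X acc b)
  (fun e => nba (esym e)).
have cov : Y `<=` (Y `&` [set x | 1/3 < phi x]) `|` (Y `&` [set x | phi x < 2/3]).
  move=> x Yx; have [h|h] := ltrP (1/3) (phi x); [left|right]; split => //=.
  lra.
have [i1|f1] := pselect (infinite_set (Y `&` [set x | 1/3 < phi x])).
  by exists a, phi; split.
have i2 : infinite_set (Y `&` [set x | phi x < 2/3]).
  move=> f2; apply: iY; apply: sub_finite_set cov _.
  by rewrite finite_setU; split => //; apply: contrapT.
exists b, (fun x => 1 - phi x); split => //.
- move=> x; apply: continuousB; [exact: cvg_cst | exact: phic].
- by rewrite phib // subrr.
- apply: infinite_sub _ _ _ i2 => x [Yx /= h]; split => //=.
  lra.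
Qed.


Section Seq.
Variable pk : set X -> X * (X -> R).

Fixpoint Yseq (n : nat) : set X :=
  match n with 0 => setT | n.+1 => Yseq n `&` [set x | 1/3 < (pk (Yseq n)).2 x] end.

Fixpoint eseq (n : nat) : X -> R :=
  match n with 0 => fun _ => 1
  | n.+1 => fun x => eseq n x * Num.max 0 ((pk (Yseq n)).2 x - 1/3) end.
End Seq.

Lemma infinite_fail : @tychonoff_space R X -> infinite_set [set: X] ->
  ~ @Tpp_noetherian R X /\ ~ @Tpp_artinian R X.
Proof.
move=> tX iX.
have [x0 _] := infinite_n0 _ iX.
have hc : forall Y : set X, exists p : X * (X -> R), infinite_set Y ->
   [/\ Y p.1, continuous p.2, p.2 p.1 = 0 &
    infinite_set (Y `&` [set x | 1/3 < p.2 x])].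
  move=> Y; have [iY|fY] := pselect (infinite_set Y); last by exists (x0, fun _ => 0).
  have [a [psi [? ? ? ?]]] := step Y tX iY.
  by exists (a, psi).
have [pk Hpk] := choice hc.
pose Y := Yseq pk; pose e := eseq pk.
pose a n := (pk (Y n)).1; pose psi n := (pk (Y n)).2.
have iY : forall n, infinite_set (Y n).
  elim=> [|n IH] //; by have [] := Hpk _ IH.
have Ya : forall n, Y n (a n) by move=> n; have [] := Hpk _ (iY n).
have psic : forall n, continuous (psi n) by move=> n; have [] := Hpk _ (iY n).
have psia : forall n, psi n (a n) = 0 by move=> n; have [] := Hpk _ (iY n).
have econt : forall n, continuous (e n).
  elim=> [|n IH] /=; first by exact: cst_continuous.
  move=> x; apply: continuousM; first exact: IH.
  apply: continuous_max; first exact: cvg_cst.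
  by apply: continuousB; [exact: psic | exact: cvg_cst].
have enz : forall n x, Y n x -> e n x != 0.
  elim=> [|n IH] x /=; first by rewrite oner_neq0.
  move=> [Ynx h]; rewrite mulf_neq0 ?IH //.
  rewrite gt_eqF // lt_max; apply/orP; right; rewrite subr_gt0; exact: h.
split.
- move=> noeth.
  have mono : forall n, Van (Y n) `<=` Van (Y n.+1).
    by move=> n f [Tf f0]; split => // x [Yx _]; exact: f0.
  have [N HN] := noeth (fun n => Van (Y n)) (fun n => Van_ideal (Y n)) mono.
  have := HN N.+1 (leqnSn N).
  pose f := fun x => Num.max (0:R) (1/3 - psi N x).
  have Vf : Van (Y N.+1) f.
    split.
      apply: cont_Tpp => x; rewrite /f.
      apply: (@continuous_max R X (fun _ => 0) (fun y => 1/3 - psi N y)); first exact: cvg_cst.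
      by apply: continuousB; [exact: cvg_cst | exact: psic].
    move=> x [_ /= h]; rewrite /f; apply/max_idPl; rewrite subr_le0; exact: ltW.
  move=> E; rewrite E in Vf; have [_ /(_ _ (Ya N))] := Vf.
  move=> h; have H : 1/3 - psi N (a N) <= f (a N) by rewrite /f le_max lexx orbT.
  by rewrite h psia in H; move: H; clear; lra.
- move=> art.
  have mono : forall n, Van [set x | e n.+1 x = 0] `<=` Van [set x | e n x = 0].
    by move=> n f [Tf f0]; split => // x /= ex; apply: f0 => /=; rewrite ex mul0r.
  have [N HN] := art (fun n => Van [set x | e n x = 0]) (fun n => Van_ideal _) mono.
  have := HN N.+1 (leqnSn N).
  have Ve : Van [set x | e N x = 0] (e N).
    by split => //; apply: cont_Tpp; exact: econt.
  move=> E; rewrite -E in Ve; have [_ /(_ (a N))] := Ve.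
  have : e N (a N) != 0 by apply: enz.
  move=> /eqP h1 h2; apply: h1; apply: h2 => /=.
  rewrite -/(psi N) psia.
  have -> : Num.max (0:R) (0 - 1/3) = 0 by apply/max_idPl; lra.
  by rewrite mulr0.
Qed.


Section Fin.
Variable s : seq X.
Hypothesis cover : forall x : X, x \in s.

Lemma sep_list (acc : accessible_space X) (x : X) : forall t : seq X,
  exists W : set X, [/\ open W, W x & forall y, y \in t -> y != x -> ~ W y].
Proof.
elim=> [|b t IH]; first by exists setT; split => //; exact: openT.
have [W [oW Wx HW]] := IH.
have [bx|bx] := eqVneq b x.
  exists W; split => // y; rewrite inE => /orP[/eqP ->|yt]; first by rewrite bx eqxx.
  exact: HW.
have [A [oA xA bA]] : exists A : set X, [/\ open A, x \in A & b \in ~` A].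
  by apply: acc; rewrite eq_sym.
exists (W `&` A); split => //; first exact: openI.
  by split => //; rewrite -inE.
move=> y; rewrite inE => /orP[/eqP ->|yt] yx [Wy Ay].
  by move: bA; rewrite inE /= => /(_ Ay).
exact: (HW y yt yx Wy).
Qed.

Lemma all_cont (acc : accessible_space X) (f : X -> R) : continuous f.
Proof.
move=> x B /= Bf.
have [W [oW Wx HW]] := sep_list acc x s.
have Bfx : B (f x) by apply: nbhs_singleton.
apply: (@filterS _ _ _ W); last exact: open_nbhs_nbhs.
move=> y Wy; have [yx|yx] := eqVneq y x; first by rewrite /= yx.
by have := HW y (cover y) yx Wy.
Qed.

Lemma all_Tpp (acc : accessible_space X) (f : X -> R) : @Tpp R X f.
Proof. exact/cont_Tpp/all_cont. Qed.

Definition supp (I : set (X -> R)) : set X := [set x | exists g, I g /\ g x != 0].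

Lemma ideal_char (acc : accessible_space X) (I : set (X -> R)) :
  @Tpp_ideal R X I -> forall f, I f <-> (forall x, f x != 0 -> supp I x).
Proof.
move=> [_ I0 IB IM] f; split; first by move=> If x fx; exists f.
suff H : forall t : seq X, forall f, (forall x, f x != 0 -> x \in t /\ supp I x) -> I f.
  by move=> Hf; apply: (H s) => x fx; split; [exact: cover | exact: Hf].
elim=> [|a t IH] {}f Hf.
  suff -> : f = (fun _ => 0) by [].
  by apply/funext => x; apply/eqP; apply: contraT => /Hf [].
pose f1 := fun x => if x == a then 0 else f x.
pose f2 := fun x => if x == a then f a else 0.
have If1 : I f1.
  apply: IH => x; rewrite /f1; case: ifPn => [_|xa fx]; first by rewrite eqxx.
  by have [] := Hf x fx; rewrite inE (negbTE xa).
have If2 : I f2.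
  have [fa0|fa0] := eqVneq (f a) 0.
    suff -> : f2 = (fun _ => 0) by [].
    by apply/funext => x; rewrite /f2; case: ifPn.
  have [_ [g [Ig ga]]] := Hf a fa0.
  suff -> : f2 = (fun x => (if x == a then f a / g a else 0) * g x).
    by apply: IM => //; exact: all_Tpp.
  apply/funext => x; rewrite /f2; case: ifPn => [/eqP ->|_]; last by rewrite mul0r.
  by rewrite divfK.
have := IB _ _ If1 (IB _ _ I0 If2).
suff -> : (fun x => f1 x - (0 - f2 x)) = f by [].
apply/funext => x; rewrite /f1 /f2; case: ifPn => [/eqP ->|_].
  by rewrite !sub0r opprK.
by rewrite subrr subr0.
Qed.

Lemma stab (P : nat -> X -> Prop) : (forall n x, P n x -> P n.+1 x) ->
  exists N, forall n, (N <= n)%N -> forall x, P n x <-> P N x.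
Proof.
move=> Pm.
have PW : forall m n x, (m <= n)%N -> P m x -> P n x.
  move=> m n x /subnK <-; elim: (n - m)%N => [|k IH] //= Pmx.
  by rewrite addSn; apply: Pm; apply: IH.
suff H : forall t : seq X, exists N, forall n, (N <= n)%N -> forall x, x \in t -> P n x <-> P N x.
  by have [N HN] := H s; exists N => n Nn x; apply: HN => //; exact: cover.
elim=> [|a t [N1 HN1]]; first by exists 0%N.
have [[m Pma]|nP] := pselect (exists m, P m a).
  exists (maxn N1 m) => n Nn x; rewrite inE => /orP[/eqP ->|xt].
    have mn : (m <= n)%N by apply: leq_trans (leq_maxr N1 m) Nn.
    by split => _; apply: PW Pma => //; exact: leq_maxr.
  rewrite HN1 //; last exact: leq_trans (leq_maxl _ _) Nn.
  by rewrite (HN1 (maxn N1 m)) // leq_maxl.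
exists N1 => n Nn x; rewrite inE => /orP[/eqP ->|xt]; last exact: HN1.
by split => h; exfalso; apply: nP; eexists; exact: h.
Qed.

End Fin.

Lemma fin_good (acc : accessible_space X) : finite_set [set: X] ->
  @Tpp_noetherian R X /\ @Tpp_artinian R X.
Proof.
case/finite_fsetP => B BE.
have cover : forall x : X, x \in finmap.enum_fset B.
  move=> x; have : [set: X] x by [].
  rewrite BE /=. by [].
split.
- move=> I Iid Imono.
  have sm : forall n x, supp (I n) x -> supp (I n.+1) x.
    by move=> n x [g [Ig gx]]; exists g; split => //; exact: Imono.
  have [N HN] := stab (finmap.enum_fset B) cover (fun n x => supp (I n) x) sm.
  exists N => n Nn; apply/seteqP; split => f.
    move/(ideal_char (finmap.enum_fset B) cover acc _ (Iid n)) => Hf.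
    by apply/(ideal_char (finmap.enum_fset B) cover acc _ (Iid N)) => x /Hf /(HN n Nn x).
  move/(ideal_char (finmap.enum_fset B) cover acc _ (Iid N)) => Hf.
  by apply/(ideal_char (finmap.enum_fset B) cover acc _ (Iid n)) => x /Hf /(HN n Nn x).
- move=> I Iid Imono.
  have sm : forall n x, ~ supp (I n) x -> ~ supp (I n.+1) x.
    by move=> n x h1 [g [Ig gx]]; apply: h1; exists g; split => //; exact: Imono.
  have [N HN] := stab (finmap.enum_fset B) cover (fun n x => ~ supp (I n) x) sm.
  exists N => n Nn; apply/seteqP; split => f.
    move/(ideal_char (finmap.enum_fset B) cover acc _ (Iid n)) => Hf.
    apply/(ideal_char (finmap.enum_fset B) cover acc _ (Iid N)) => x /Hf Sx.
    by apply: contrapT => nS; apply: (proj2 (HN n Nn x) nS).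
  move/(ideal_char (finmap.enum_fset B) cover acc _ (Iid N)) => Hf.
  apply/(ideal_char (finmap.enum_fset B) cover acc _ (Iid n)) => x /Hf Sx.
  by apply: contrapT => nS; apply: (proj1 (HN n Nn x) nS).
Qed.
End S.

Theorem theorem5p1 (R : realType) (X : topologicalType) :
  @tychonoff_space R X ->
  (finite_set [set: X] <-> @Tpp_noetherian R X) /\
  (finite_set [set: X] <-> @Tpp_artinian R X).
Proof.
move=> tX; have [acc _] := tX.
split; split.
- by move=> fX; have [] := @fin_good R X acc fX.
- move=> nX; apply: contrapT => iX.
  by have [h _] := @infinite_fail R X tX iX; apply: h.
- by move=> fX; have [] := @fin_good R X acc fX.
- move=> aX; apply: contrapT => iX.
  by have [_ h] := @infinite_fail R X tX iX; apply: h.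
Qed.
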